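(* Let $\Gamma$ be a splice diagram satisfying the edge determinant condition. Then $d_u\,d_v\geq \ell_{u,v}^2$ for all nodes $u,v$ of $\Gamma$, with equality if and only if $u=v$.
   Context: A splice diagram is a finite tree $\Gamma$ with at least one vertex of valency $\geq3$ and no vertex of valency $2$; vertices of valency $1$ are leaves, the others nodes. For each node $v$ and edge $e$ adjacent to $v$ a positive integer weight $d_{v,e}$ is given; $d_{v,u}:=d_{v,e}$ for $e$ the edge at $v$ on the geodesic $[v,u]$. The total weight of a node is $d_v=\prod_{e\ni v}d_{v,e}$. For distinct vertices $u,v$, $\ell_{u,v}$ is the product of all weights $d_{w,e}$ with $w$ a node on $[u,v]$ and $e$ an edge at $w$ not contained in $[u,v]$; $\ell_{v,v}:=d_v$. Edge determinant condition: $d_{u,v}d_{v,u}>\ell_{u,v}$ for each edge $[u,v]$ between two nodes. *)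

(* Defs.v *)
From mathcomp Require Import all_boot.
Set Implicit Arguments. Unset Strict Implicit. Unset Printing Implicit Defensive.

Section Splice.
Variables (V : finType) (adj : rel V) (d : V -> V -> nat).

Definition valency (v : V) : nat := #|[pred x | adj v x]|.
Definition leaf (v : V) : bool := valency v == 1.
Definition node (v : V) : bool := valency v != 1.

(* p is the vertex list (after u) of a simple path from u to v *)
Definition upath (u v : V) (p : seq V) : bool :=
  [&& path adj u p, last u p == v & uniq (u :: p)].

Definition is_tree : Prop :=
  [/\ symmetric adj, irreflexive adj &
      forall u v : V, exists! p : seq V, upath u v p].

(* splice diagram structure (weights d w x for node w, x adjacent to w) *)
Definition splice_diagram : Prop :=
  [/\ is_tree,
      exists v : V, 3 <= valency v,
      forall v : V, valency v != 2 &
      forall w x : V, node w -> adj w x -> 0 < d w x].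

Definition dtot (v : V) : nat := \prod_(x : V | adj v x) d v x.

Definition edge_in (s : seq V) (w x : V) : bool :=
  ((w, x) \in zip s (behead s)) || ((x, w) \in zip s (behead s)).

(* l for the path with vertex list s: product of weights d w x, w a node
   on s, edge {w,x} at w not contained in s.  For s = [:: v] this is d_v. *)
Definition ell_path (s : seq V) : nat :=
  \prod_(w <- s | node w) \prod_(x : V | adj w x && ~~ edge_in s w x) d w x.

(* l_{u,v}, computed along the geodesic [u,v] = u :: p *)
Definition ell (u v : V) (p : seq V) : nat := ell_path (u :: p).

(* edge determinant condition: for each edge [u,v] between two nodes,
   d_{u,v} d_{v,u} > l_{u,v} (the geodesic from u to v is [:: v]) *)
Definition edge_det_cond : Prop :=
  forall u v : V, node u -> node v -> adj u v ->
    ell u v [:: v] < d u v * d v u.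

End Splice.

(* Main.v *)
Require Import Defs.
From mathcomp Require Import all_boot.
From mathcomp Require Import zify.
Set Implicit Arguments. Unset Strict Implicit. Unset Printing Implicit Defensive.

Definition Pf (V : Type) (f : V -> nat) (s : seq V) := \prod_(w <- s) f w.
Definition Ef (V : Type) (f : V -> nat) (s : seq V) :=
  \prod_(z <- zip s (behead s)) (f z.1 * f z.2).
Definition Df (V : Type) (g : V -> V -> nat) (s : seq V) :=
  \prod_(z <- zip s (behead s)) (g z.1 z.2 * g z.2 z.1).

Lemma EfP (V : Type) (f : V -> nat) x t :
  Ef f (x :: t) * (f x * f (last x t)) = Pf f (x :: t) ^ 2.
Proof.
elim: t x => [|y t IH] x.
  by rewrite /Ef /Pf /= !big_nil !big_cons big_nil -mulnn; lia.
rewrite /Ef /Pf /= big_cons /= [in RHS]big_cons.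
move: (IH y); rewrite /Ef /Pf /= => {}IH.
rewrite -!mulnn in IH *.
set P := \prod_(_ <- y :: t) _ in IH *.
set E := \prod_(_ <- zip (y :: t) t) _ in IH *.
have -> : f x * P * (f x * P) = f x * f x * (P * P) by lia.
rewrite -IH; lia.
Qed.

Lemma mem_zip_b (V : eqType) (s : seq V) a b :
  (a, b) \in zip s (behead s) -> (a \in s) && (b \in s).
Proof.
elim: s => [|x s IH] //=.
case: s IH => [|y s] IH //=.
rewrite in_cons => /orP [/eqP [-> ->]|H].
  by rewrite !in_cons !eqxx !orbT.
move: (IH H) => /andP [H1 H2].
by apply/andP; split; apply: (@mem_behead _ [:: x, y & s]).
Qed.

Lemma edge_in_1 (V : finType) (a w x : V) : edge_in [:: a] w x = false.
Proof. by rewrite /edge_in. Qed.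

Lemma edge_in_cons2 (V : finType) (a b w x : V) t :
  edge_in [:: a, b & t] w x =
  ((w == a) && (x == b)) || ((w == b) && (x == a)) || edge_in (b :: t) w x.
Proof.
rewrite /edge_in /= !in_cons !xpair_eqE.
case: (w == a); case: (x == b); case: (w == b); case: (x == a);
case: ((w, x) \in zip (b :: t) t); case: ((x, w) \in zip (b :: t) t) => //.
Qed.

Lemma edge_in_mem (V : finType) (s : seq V) w x :
  edge_in s w x -> (w \in s) && (x \in s).
Proof.
rewrite /edge_in => /orP [/mem_zip_b //|/mem_zip_b /andP [-> ->]] //.
Qed.

Definition Qf (V : finType) (adj : rel V) (d : V -> V -> nat) (s : seq V) :=
  \prod_(w <- s) \prod_(x | adj w x && edge_in s w x) d w x.

Lemma Q_1 (V : finType) (adj : rel V) d (a : V) : Qf adj d [:: a] = 1.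
Proof.
rewrite /Qf big_seq1; apply: big_pred0 => x; by rewrite edge_in_1 andbF.
Qed.

Lemma Q_cons (V : finType) (adj : rel V) d (a b : V) t :
  symmetric adj -> uniq [:: a, b & t] -> adj a b ->
  Qf adj d [:: a, b & t] = d a b * d b a * Qf adj d (b :: t).
Proof.
move=> Hsym /= /andP [Ha /andP [Hb Hu]] Hab.
have Hab' : (a == b) = false.
  by apply/negbTE; apply: contraNneq Ha => ->; rewrite in_cons eqxx.
have He : forall x, edge_in (b :: t) a x = false.
  by move=> x; apply/negP => /edge_in_mem /andP [H _]; rewrite H in Ha.
have He2 : forall x, edge_in (b :: t) x a = false.
  by move=> x; apply/negP => /edge_in_mem /andP [_ H]; rewrite H in Ha.
rewrite /Qf big_cons.
have -> : \prod_(x | adj a x && edge_in [:: a, b & t] a x) d a x = d a b.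
  rewrite (eq_bigl (fun x => x == b)) ?big_pred1_eq // => x.
  rewrite edge_in_cons2 eqxx Hab' He /= orbF.
  by case: eqP => [->|]; rewrite ?Hab ?andbF.
rewrite (eq_big_seq (fun w => (if w == b then d b a else 1) *
   \prod_(x | adj w x && edge_in (b :: t) w x) d w x)).
  rewrite big_split /= big_cons eqxx big1_seq ?muln1 ?mulnA //.
  move=> i /andP [_ Hi]; case: eqP => // Hib; subst i; by rewrite Hi in Hb.
move=> w Hw.
have Hwa : (w == a) = false.
  by apply/negbTE; apply: contraNneq Ha => <-.
under eq_bigl => x do rewrite edge_in_cons2 Hwa /=.
case: eqP => [->|Hwb].
  rewrite (bigD1 a) /=; last by rewrite Hsym Hab eqxx.
  congr (_ * _); apply: eq_bigl => x.
  case: (eqVneq x a) => [->|Hxa] /=.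
    by rewrite He2 !andbF.
  by rewrite andbT.
by rewrite mul1n.
Qed.

Lemma D_eq_Q (V : finType) (adj : rel V) d (u : V) p :
  symmetric adj -> path adj u p -> uniq (u :: p) ->
  Df d (u :: p) = Qf adj d (u :: p).
Proof.
move=> Hsym; elim: p u => [|y p IH] u.
  by rewrite Q_1 /Df /= big_nil.
move=> /= /andP [Huy Hp] Hun.
rewrite Q_cons //; rewrite /Df /= big_cons /=.
move: Hun => /= /andP [_ Hun].
by rewrite -IH.
Qed.

Lemma PellQ (V : finType) (adj : rel V) d (s : seq V) :
  all (node adj) s ->
  Pf (dtot adj d) s = ell_path adj d s * Qf adj d s.
Proof.
move=> H.
rewrite /ell_path -big_filter (all_filterP H) /Pf /Qf -big_split /=.
apply: eq_bigr => w _.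
by rewrite /dtot (bigID (fun x => edge_in s w x)) /= mulnC.
Qed.

Lemma nodes_path (V : finType) (adj : rel V) :
  symmetric adj -> forall x q, path adj x q -> uniq (x :: q) ->
  node adj (last x q) -> all (node adj) q.
Proof.
move=> Hsym x q; elim: q x => [|y q IH] x //=.
move=> /andP [Hxy Hp] /andP [Hx Hu] Hl.
apply/andP; split; last exact: (IH y Hp Hu Hl).
case: q IH Hp Hu Hl Hx => [|z q] IH Hp Hu Hl Hx; first exact Hl.
move: Hp => /= /andP [Hyz _].
have Hxz : x != z.
  by apply: contraNneq Hx => ->; rewrite !in_cons eqxx orbT.
have H2 : 2 <= #|[pred t | adj y t]|.
  have <- : #|[:: x; z]| = 2 by apply/card_uniqP; rewrite /= in_cons orbF Hxz.
  apply: subset_leq_card; apply/subsetP => t; rewrite !in_cons orbF.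
  by move=> /orP [/eqP ->|/eqP ->]; rewrite inE //= Hsym.
by rewrite /node /valency; apply/eqP => H1; rewrite H1 in H2.
Qed.

Lemma edge_lt (V : finType) (adj : rel V) d :
  symmetric adj -> irreflexive adj -> edge_det_cond adj d ->
  (forall w x : V, node adj w -> adj w x -> 0 < d w x) ->
  forall a b, node adj a -> node adj b -> adj a b ->
  dtot adj d a * dtot adj d b < (d a b * d b a) ^ 2.
Proof.
move=> Hsym Hirr Hedc Hpos a b Ha Hb Hab.
have Hne : a != b by apply: contraTneq Hab => ->; rewrite Hirr.
have HP := @PellQ V adj d [:: a; b].
rewrite -D_eq_Q //= ?Ha ?Hb ?Hab ?in_cons ?orbF ?Hne // in HP.
have HP' : dtot adj d a * dtot adj d b = ell_path adj d [:: a; b] * (d a b * d b a).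
  by move: (HP erefl); rewrite /Pf /Df /= !big_cons !big_nil /= !muln1.
have He := Hedc a b Ha Hb Hab; rewrite /ell in He.
have H1 := Hpos a b Ha Hab.
have H2 := Hpos b a Hb (etrans (Hsym b a) Hab).
rewrite HP' -mulnn.
move: (ell_path adj d [:: a; b]) He => L He.
nia.
Qed.

Lemma E_lt (V : finType) (adj : rel V) d :
  symmetric adj -> irreflexive adj -> edge_det_cond adj d ->
  (forall w x : V, node adj w -> adj w x -> 0 < d w x) ->
  forall u p, path adj u p -> uniq (u :: p) -> all (node adj) (u :: p) ->
  [/\ 0 < Df d (u :: p), Ef (dtot adj d) (u :: p) <= Df d (u :: p) ^ 2 &
      (p != [::] -> Ef (dtot adj d) (u :: p) < Df d (u :: p) ^ 2)].
Proof.
move=> Hsym Hirr Hedc Hpos u p.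
elim: p u => [|y p IH] u.
  by move=> _ _ _; rewrite /Df /Ef /= !big_nil.
move=> /= /andP [Huy Hp] /andP [_ Hun] /andP [Hu Hall].
have Hy : node adj y by move: Hall => /= /andP [].
have [h1 h2 _] := IH y Hp Hun Hall.
have He := edge_lt Hsym Hirr Hedc Hpos Hu Hy Huy.
have H1 := Hpos u y Hu Huy.
have H2 := Hpos y u Hy (etrans (Hsym y u) Huy).
move: h1 h2 He; rewrite /Df /Ef /= !big_cons /=.
move: (\prod_(i <- zip (y :: p) p) (d i.1 i.2 * d i.2 i.1)) => D.
move: (\prod_(i <- zip (y :: p) p) (dtot adj d i.1 * dtot adj d i.2)) => E.
rewrite -!mulnn => h1 h2 He.
split; [nia | nia | move=> _; nia].
Qed.

Theorem lemma2p9 (V : finType) (adj : rel V) (d : V -> V -> nat) :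
  splice_diagram adj d ->
  edge_det_cond adj d ->
  forall u v : V, node adj u -> node adj v ->
  forall p : seq V, upath adj u v p ->
    ell adj d u v p ^ 2 <= dtot adj d u * dtot adj d v /\
    (dtot adj d u * dtot adj d v = ell adj d u v p ^ 2 <-> u = v).
Proof.
move=> [[Hsym Hirr _] _ _ Hpos] Hedc u v Hu Hv p /and3P [Hp /eqP Hlast Hun].
have Hall : all (node adj) (u :: p).
  by rewrite /= Hu (nodes_path Hsym Hp Hun) // Hlast.
have HP := PellQ d Hall.
rewrite -D_eq_Q // in HP.
have HE := EfP (dtot adj d) u p.
rewrite Hlast HP in HE.
have [h1 h2 h3] := E_lt Hsym Hirr Hedc Hpos Hp Hun Hall.
have Hdu : 0 < dtot adj d u by apply: prodn_cond_gt0 => x; apply: Hpos.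
have Hdv : 0 < dtot adj d v by apply: prodn_cond_gt0 => x; apply: Hpos.
rewrite /ell.
case: p Hp Hlast Hun HP HE h1 h2 h3 Hall => [|y q] Hp Hlast Hun HP HE h1 h2 h3 Hall.
  rewrite /= in Hlast; subst v.
  have Hd : Df d [:: u] = 1 by rewrite /Df /= big_nil.
  rewrite Hd muln1 /Pf big_seq1 in HP.
  by rewrite -HP mulnn; split.
have Hlt := h3 erefl.
move: (ell_path adj d (u :: y :: q)) (Df d (u :: y :: q)) (Ef (dtot adj d) (u :: y :: q)) HE h1 Hlt
  => L D E HE h1 Hlt.
have HL : L ^ 2 < dtot adj d u * dtot adj d v.
  rewrite -!mulnn in HE Hlt *. nia.
split; first exact: ltnW.
split => [H|Huv]; first by rewrite H ltnn in HL.
exfalso; rewrite -Huv in Hlast.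
move: Hun => /= /andP [Hnot _].
have := mem_last y q. rewrite /= in Hlast; rewrite Hlast.
by move=> H; rewrite H in Hnot.
Qed.
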